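(* Let $m\geq 1$ and let $f=a_0+a_1z+\cdots+a_mz^m\in\mathbb{Z}[z]$ with $a_m\neq 0$. Suppose there exist a prime $p$ and coprime positive integers $k$ and $j$ with $1\leq j\leq m$ such that $p\nmid a_j$, $p^k\mid a_i$ for all $i=0,\ldots,j-1$, and $p^{k+1}\nmid a_0$. Then for every factorization $f=gh$ with $g,h\in\mathbb{Z}[z]$ one has $\min\{\deg g,\deg h\}\leq m-j$ (more precisely, one of $g,h$ has degree $0$ or degree at most $m-j$). In particular, if $f$ is primitive and $j=m$, then $f$ is irreducible in $\mathbb{Z}[z]$; and if $f$ is primitive, $j=m-1$, and $f$ has no root in $\mathbb{Q}$, then $f$ is irreducible in $\mathbb{Z}[z]$.
   Context: A polynomial in $\mathbb{Z}[z]$ is primitive if the greatest common divisor of its coefficients is $1$. *)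

(* Defs.v *)
From HB Require Import structures.
From mathcomp Require Import all_boot all_order all_algebra.
Set Implicit Arguments. Unset Strict Implicit. Unset Printing Implicit Defensive.
Import Order.TTheory GRing.Theory Num.Theory.
Local Open Scope ring_scope.

Definition primitive_poly (f : {poly int}) : Prop :=
  \big[gcdn/0%N]_(i < size f) absz (f`_i) = 1%N.

Definition irreducible_Zpoly (f : {poly int}) : Prop :=
  [/\ f != 0, f \isn't a GRing.unit &
      forall g h : {poly int}, f = g * h -> g \is a GRing.unit \/ h \is a GRing.unit].

(* Main.v *)
Require Import Defs.
From HB Require Import structures.
From mathcomp Require Import all_boot all_order all_algebra.
From mathcomp Require Import zify.
Import Order.TTheory GRing.Theory Num.Theory.
Local Open Scope ring_scope.

Section NP.
Variables (p k j : nat).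
Hypothesis pp : prime p.
Hypothesis j0 : (0 < j)%N.

Definition v (x : int) : nat := logn p `|x|.
Definition wt (g : {poly int}) (i : nat) : nat := (j * v (g`_i) + k * i)%N.

Lemma dvdv (x : int) e : x != 0 -> ((p ^ e)%N%:Z %| x)%Z = (e <= v x)%N.
Proof.
move=> x0; rewrite dvdzE absz_nat pfactor_dvdn // absz_gt0 //.
Qed.

Lemma vM (x y : int) : x != 0 -> y != 0 -> v (x * y) = (v x + v y)%N.
Proof. by move=> x0 y0; rewrite /v abszM lognM // absz_gt0. Qed.

Lemma dvd_sum n (F : nat -> int) e :
  (forall i, (i < n)%N -> F i != 0 -> (e < v (F i))%N) ->
  ((p ^ e.+1)%N%:Z %| \sum_(i < n) F i)%Z.
Proof.
move=> H; apply: rpred_sum => i _.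
have [->|Fi0] := eqVneq (F i) 0; first exact: dvdz0.
by rewrite dvdv // H.
Qed.

Lemma coef_nz_lt (g : {poly int}) i : g`_i != 0 -> (i < size g)%N.
Proof. by apply: contraR; rewrite -leqNgt => H; rewrite nth_default. Qed.

Arguments coef_nz_lt [g i].

Lemma extremal (g : {poly int}) : g != 0 -> exists mu r,
  [/\ g`_r != 0, wt g r = mu, (forall i, g`_i != 0 -> (mu <= wt g i)%N) &
      (forall i, g`_i != 0 -> (r < i)%N -> (mu < wt g i)%N)].
Proof.
move=> g0.
pose P w := [exists i : 'I_(size g), (g`_i != 0) && (wt g i == w)].
have exP : exists w, P w.
  have sz : ((size g).-1 < size g)%N by rewrite prednK // size_poly_gt0.
  exists (wt g (size g).-1); apply/existsP; exists (Ordinal sz) => /=.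
  by rewrite eqxx andbT -lead_coefE lead_coef_eq0.
case: (ex_minnP exP) => mu /existsP [i0 /andP [nz0 /eqP w0]] minmu.
pose Q i := (g`_i != 0) && (wt g i == mu).
have exQ : exists i, Q i by exists i0; rewrite /Q nz0 w0 eqxx.
have ubQ : forall i, Q i -> (i <= size g)%N.
  by move=> i /andP [/coef_nz_lt /ltnW].
case: (ex_maxnP exQ ubQ) => r /andP [nzr /eqP wr] maxr.
exists mu, r; split => //.
  move=> i nzi; apply: minmu; apply/existsP; exists (Ordinal (coef_nz_lt nzi)).
  by rewrite /= nzi eqxx.
move=> i nzi ri; rewrite ltn_neqAle; apply/andP; split.
  apply/negP => /eqP e; have := maxr i; rewrite /Q nzi -e eqxx => /(_ isT).
  by rewrite leqNgt ri.
apply: minmu; apply/existsP; exists (Ordinal (coef_nz_lt nzi)).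
by rewrite /= nzi eqxx.
Qed.

Lemma dvd_bsum (I : finType) (P : pred I) (F : I -> int) e :
  (forall i, P i -> F i != 0 -> (e < v (F i))%N) ->
  ((p ^ e.+1)%N%:Z %| \sum_(i | P i) F i)%Z.
Proof.
move=> H; apply: rpred_sum => i Pi.
have [->|Fi0] := eqVneq (F i) 0; first exact: dvdz0.
by rewrite dvdv // H.
Qed.

Lemma term_wt (g h : {poly int}) n i : (i <= n)%N -> g`_i * h`_(n - i) != 0 ->
  (j * v (g`_i * h`_(n - i)) + k * n)%N = (wt g i + wt h (n - i))%N.
Proof.
move=> le; rewrite mulf_eq0 negb_or => /andP [a b]; rewrite vM // /wt.
have E : (k * n = k * i + k * (n - i))%N by rewrite -mulnDr subnKC.
rewrite mulnDr E; lia.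
Qed.

Arguments term_wt [g h n i].

Lemma prod_C (g h : {poly int}) mu1 r mu2 s :
  (forall i, g`_i != 0 -> (mu1 <= wt g i)%N) ->
  (forall i, g`_i != 0 -> (r < i)%N -> (mu1 < wt g i)%N) ->
  (forall i, h`_i != 0 -> (mu2 <= wt h i)%N) ->
  (forall i, h`_i != 0 -> (s < i)%N -> (mu2 < wt h i)%N) ->
  forall n, (g * h)`_n != 0 -> (r + s < n)%N -> (mu1 + mu2 < wt (g * h) n)%N.
Proof.
move=> m1 x1 m2 x2 n fn rsn; rewrite ltnNge; apply/negP => le.
have : ((p ^ (v (g * h)`_n).+1)%N%:Z %| (g * h)`_n)%Z.
  rewrite [X in (_ %| X)%Z]coefM.
  apply: (@dvd_bsum _ xpredT) => i _ nz.
  have lin : (i <= n)%N by rewrite -ltnS.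
  have := term_wt lin nz; move: nz; rewrite mulf_eq0 negb_or => /andP [a b] E.
  have : (mu1 + mu2 < wt g i + wt h (n - i))%N.
    case: (leqP i r) => ir.
      have := m1 _ a; have := x2 _ b; lia.
    have := x1 _ a ir; have := m2 _ b; lia.
  rewrite -E; move: le; rewrite /wt => le lt.
  have : (j * v (g * h)`_n < j * v (g`_i * h`_(n - i)))%N by lia.
  by rewrite ltn_pmul2l.
by rewrite dvdv // ltnn.
Qed.

Lemma prod_A (g h : {poly int}) mu1 r mu2 s :
  g`_r != 0 -> wt g r = mu1 -> h`_s != 0 -> wt h s = mu2 ->
  (forall i, g`_i != 0 -> (mu1 <= wt g i)%N) ->
  (forall i, g`_i != 0 -> (r < i)%N -> (mu1 < wt g i)%N) ->
  (forall i, h`_i != 0 -> (mu2 <= wt h i)%N) ->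
  (forall i, h`_i != 0 -> (s < i)%N -> (mu2 < wt h i)%N) ->
  (g * h)`_(r + s) != 0 /\ wt (g * h) (r + s) = (mu1 + mu2)%N.
Proof.
move=> gr w1 hs w2 m1 x1 m2 x2.
have rlt : (r < (r + s).+1)%N by rewrite ltnS leq_addr.
set t := (v g`_r + v h`_s)%N.
have xnz : g`_r * h`_(r + s - r) != 0 by rewrite addKn mulf_neq0.
have vx : v (g`_r * h`_(r + s - r)) = t by rewrite addKn vM.
have E := coefM g h (r + s).
rewrite (bigD1 (Ordinal rlt)) //= in E.
set R := \sum_(i | _) _ in E.
have dR : ((p ^ t.+1)%N%:Z %| R)%Z.
  apply: dvd_bsum => i ir nz.
  have lin : (i <= r + s)%N by rewrite -ltnS.
  have := term_wt lin nz; move: nz; rewrite mulf_eq0 negb_or => /andP [a b] E'.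
  have ir' : (i : nat) != r by apply: contra ir => /eqP e; apply/eqP/val_inj.
  have : (mu1 + mu2 < wt g i + wt h (r + s - i))%N.
    case: (ltngtP i r) => ir2; last by rewrite ir2 eqxx in ir'.
      have := m1 _ a; have := x2 _ b; lia.
    have := x1 _ a ir2; have := m2 _ b; lia.
  rewrite -E'; have := term_wt (leq_addr s r) xnz; rewrite vx addKn -w1 -w2.
  move=> Et lt.
  have : (j * t < j * v (g`_i * h`_(r + s - i)))%N by lia.
  by rewrite ltn_pmul2l.
have ndiv : ~~ ((p ^ t.+1)%N%:Z %| (g * h)`_(r + s))%Z.
  apply/negP => d.
  have : ((p ^ t.+1)%N%:Z %| (g * h)`_(r + s) - R)%Z by rewrite rpredB.
  by rewrite E addrK dvdv // vx ltnn.
have fnz : (g * h)`_(r + s) != 0 by apply: contraNneq ndiv => ->; rewrite dvdz0.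
split => //.
have dt : ((p ^ t)%N%:Z %| (g * h)`_(r + s))%Z.
  rewrite E rpredD //; first by rewrite dvdv // vx.
  apply: dvdz_trans dR; rewrite dvdzE !absz_nat; apply: dvdn_exp2l; exact: leqnSn.
have vf : v (g * h)`_(r + s) = t.
  apply/eqP; rewrite eqn_leq -dvdv // dt andbT leqNgt; apply/negP => lt.
  by move: ndiv; rewrite dvdv // lt.
rewrite /wt vf -w1 -w2 /wt /t mulnDr mulnDr; lia.
Qed.

Arguments extremal [g].
Arguments prod_A [g h mu1 r mu2 s].
Arguments prod_C [g h mu1 r mu2 s].

Lemma part1 (m : nat) (f : {poly int}) :
  size f = m.+1 -> (0 < k)%N -> coprime k j -> (j <= m)%N ->
  ~~ (p%:Z %| f`_j)%Z ->
  (forall i, (i < j)%N -> ((p ^ k)%N%:Z %| f`_i)%Z) ->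
  ~~ ((p ^ k.+1)%N%:Z %| f`_0)%Z ->
  forall g h : {poly int}, f = g * h ->
     (minn (size g).-1 (size h).-1 <= m - j)%N.
Proof.
move=> sf k0 cop jm ndj dvi nd0 g h fgh.
have f0 : f != 0 by rewrite -size_poly_gt0 sf.
have g0 : g != 0 by apply: contraNneq f0 => e; rewrite fgh e mul0r.
have h0 : h != 0 by apply: contraNneq f0 => e; rewrite fgh e mulr0.
have a0 : f`_0 != 0 by apply: contraNneq nd0 => ->; rewrite dvdz0.
have va0 : v f`_0 = k.
  apply/eqP; rewrite eqn_leq -dvdv // dvi // andbT leqNgt -dvdv //.
have aj : f`_j != 0 by apply: contraNneq ndj => ->; rewrite dvdz0.
have vaj : v f`_j = 0%N.
  apply/eqP; rewrite -leqn0 leqNgt -(dvdv _ 1 aj) expn1 //.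
have w0 : wt f 0 = (j * k)%N by rewrite /wt va0; lia.
have wj : wt f j = (j * k)%N by rewrite /wt vaj; lia.
have wmid : forall i, (0 < i < j)%N -> f`_i != 0 -> (j * k < wt f i)%N.
  move=> i /andP [i0 ij] ai; rewrite /wt.
  have : (k <= v f`_i)%N by rewrite -dvdv // dvi.
  move=> /(leq_mul (leqnn j)) H; have : (0 < k * i)%N by rewrite muln_gt0 k0.
  lia.
have whi : forall i, (j < i)%N -> (j * k < wt f i)%N.
  move=> i ji; rewrite /wt; have : (k * j < k * i)%N by rewrite ltn_pmul2l.
  lia.
have [mu1 [r [gr w1 m1 x1]]] := extremal g0.
have [mu2 [s [hs w2 m2 x2]]] := extremal h0.
have [frs wrs] := prod_A gr w1 hs w2 m1 x1 m2 x2.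
have hC := prod_C m1 x1 m2 x2.
rewrite -fgh in frs wrs hC.
have g00 : g`_0 != 0 by move: a0; rewrite fgh coef0M mulf_eq0 negb_or => /andP [].
have h00 : h`_0 != 0 by move: a0; rewrite fgh coef0M mulf_eq0 negb_or => /andP [].
have wf0 : wt f 0 = (wt g 0 + wt h 0)%N.
  have nz : g`_0 * h`_(0 - 0) != 0 by rewrite subnn mulf_neq0.
  have := term_wt (leqnn 0) nz; rewrite subnn -coef0M -fgh /wt => <-; lia.
have mg0 := m1 _ g00; have mh0 := m2 _ h00.
have rsj : (r + s)%N = j.
  case: (ltngtP (r + s) j) => // H.
    case: (posnP (r + s)) => H0.
      have := hC _ aj; rewrite H0 in wrs *; move=> /(_ j0).
      by rewrite wj -w0 wrs ltnn; case.
    have := wmid (r + s)%N; rewrite H0 H => /(_ isT frs).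
    rewrite wrs ltnNge -w0 wf0 leq_add //; case.
  have := whi _ H; rewrite wrs ltnNge -w0 wf0 leq_add //; case.
have e1 : wt g 0 = mu1.
  move: mg0 mh0 wf0 w0 wrs wj; rewrite rsj; clear; lia.
have kr : (k * r = j * (v g`_0 - v g`_r))%N.
  move: e1 w1; rewrite /wt mulnBr; clear; lia.
have jr : (j %| r)%N.
  by rewrite -(@Gauss_dvdr j k) 1?coprime_sym // kr dvdn_mulr.
have szf : (size g + size h).-1 = m.+1 by rewrite -sf fgh size_mul.
have sg := coef_nz_lt gr; have sh := coef_nz_lt hs.
have [r0|rpos] := posnP r.
  move: rsj sh szf; rewrite r0 add0n => ->; clear; lia.
have := dvdn_leq rpos jr => jle.
move: rsj sg szf jle; clear; lia.
Qed.
End NP.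

Lemma absz1_unit (c : int) : `|c|%N = 1%N -> c \is a GRing.unit.
Proof. by case: c => [[|[|n]]|[|n]]. Qed.

Lemma const_factor_unit (f g h : {poly int}) :
  primitive_poly f -> f != 0 -> f = g * h -> (size g <= 1)%N ->
  g \is a GRing.unit.
Proof.
move=> pf f0 fgh sg.
have g0 : g != 0 by apply: contraNneq f0 => e; rewrite fgh e mul0r.
have sg1 : size g = 1%N.
  by apply/eqP; rewrite eqn_leq sg size_poly_gt0.
have gc := size1_polyC sg.
have E n : f`_n = g`_0 * h`_n by rewrite fgh {1}gc coefCM.
have d : dvdn (absz (g`_0)) 1.
  rewrite -pf; apply/dvdn_biggcdP => i _.
  by rewrite E abszM dvdn_mulr.
rewrite poly_unitE sg1 eqxx /=; apply: absz1_unit; apply/eqP; by rewrite -dvdn1.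
Qed.

Lemma f_not_unit (f : {poly int}) m : (1 <= m)%N -> size f = m.+1 ->
  f \isn't a GRing.unit.
Proof. by move=> m1 sf; rewrite poly_unitE sf; case: m m1 sf. Qed.

Lemma size2_root (f g h : {poly int}) : f = g * h -> size g = 2%N ->
  exists x : rat, root (map_poly intr f) x.
Proof.
move=> fgh sg.
have g1 : g`_1 != 0.
  by have := lead_coef_eq0 g; rewrite lead_coefE sg /= => ->; rewrite -size_poly_eq0 sg.
exists (- (g`_0)%:~R / (g`_1)%:~R).
rewrite fgh rmorphM /= rootM; apply/orP; left.
rewrite /root horner_coef size_map_inj_poly ?sg //; last exact: intr_inj.
rewrite big_ord_recr big_ord_recr big_ord0 /= !coef_map /= add0r expr0 expr1 mulr1.
have g1' : (g`_1)%:~R != 0 :> rat by rewrite intr_eq0.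
by rewrite mulrCA mulfV // mulr1 subrr.
Qed.

Theorem theorem1 (m : nat) (f : {poly int}) (p k j : nat) :
  (1 <= m)%N -> size f = m.+1 ->
  prime p -> (0 < k)%N -> (0 < j)%N -> coprime k j -> (j <= m)%N ->
  ~~ (p%:Z %| f`_j)%Z ->
  (forall i, (i < j)%N -> ((p ^ k)%N%:Z %| f`_i)%Z) ->
  ~~ ((p ^ k.+1)%N%:Z %| f`_0)%Z ->
  [/\ (forall g h : {poly int}, f = g * h ->
         (minn (size g).-1 (size h).-1 <= m - j)%N),
      (primitive_poly f -> j = m -> irreducible_Zpoly f) &
      (primitive_poly f -> j = m.-1 ->
         (forall x : rat, ~~ root (map_poly intr f) x) -> irreducible_Zpoly f)].
Proof.
move=> m1 sf pp k0 j0 cop jm ndj dvi nd0.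
have P1 := @part1 p k j pp j0 m f sf k0 cop jm ndj dvi nd0.
have f0 : f != 0 by rewrite -size_poly_gt0 sf.
have fnu := f_not_unit f m m1 sf.
have small : forall g h, f = g * h -> (size g <= 2)%N -> (forall x : rat, ~~ root (map_poly intr f) x) ->
    primitive_poly f -> g \is a GRing.unit.
  move=> g h fgh sg nr pf; case: (leqP (size g) 1) => sg1.
    exact: (const_factor_unit _ _ _ pf f0 fgh sg1).
  have sg2 : size g = 2%N by apply/eqP; rewrite eqn_leq sg sg1.
  have [x rx] := size2_root _ _ _ fgh sg2.
  by have := nr x; rewrite rx.
split => //.
  move=> pf jm'; split => // g h fgh.
  have := P1 _ _ fgh; rewrite jm' subnn geq_min !leqn0 => /orP [] H.
    left; apply: (const_factor_unit _ _ _ pf f0) fgh _; move: H; clear; lia.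
  right; apply: (const_factor_unit _ _ _ pf f0) (etrans fgh (mulrC _ _)) _; move: H; clear; lia.
move=> pf jm' nr; split => // g h fgh.
have := P1 _ _ fgh; rewrite jm' geq_min => /orP [] H.
  left; apply: small fgh _ nr pf; move: H m1; clear; lia.
right; apply: small (etrans fgh (mulrC _ _)) _ nr pf; move: H m1; clear; lia.
Qed.
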